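(* Let $X$ be a regular space. Then $L(X)\leq t(Q_{P}(X))$.
   Context: A function $f\colon X\to Y$ between topological spaces is quasi-continuous at $x\in X$ if for every open $U\ni x$ and every open $V\ni f(x)$ there is a non-empty open $G\subseteq U$ with $f(G)\subseteq V$; $f$ is quasi-continuous if it is so at every point. $Q_{P}(X)$ is the set of quasi-continuous functions $X\to\mathbb{R}$ with the topology of point-wise convergence (subspace topology from $\mathbb{R}^X$). The Lindelöf degree is $L(X)=\aleph_0+\min\{\eta : \text{every open cover of } X \text{ has a subcover of cardinality}\le\eta\}$. The tightness of a space $Z$ is $t(Z)=\sup_{z\in Z} t(z,Z)$, where $t(z,Z)=\aleph_0+\sup\{a(z,A): A\subseteq Z,\ z\in\overline{A}\}$ and $a(z,A)=\min\{|B|: B\subseteq A,\ z\in\overline{B}\}$. *)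

(* Defs.v *)
From HB Require Import structures.
From mathcomp Require Import all_boot all_order all_algebra.
From mathcomp Require Import all_classical all_reals all_analysis.
Set Implicit Arguments. Unset Strict Implicit. Unset Printing Implicit Defensive.
Import Order.TTheory GRing.Theory Num.Theory numFieldTopology.Exports numFieldNormedType.Exports.
Local Open Scope classical_set_scope.
Local Open Scope card_scope.

Definition quasi_continuous_at {X Y : topologicalType} (f : X -> Y) (x : X) :=
  forall (U : set X) (V : set Y), open U -> U x -> open V -> V (f x) ->
    exists G : set X, [/\ open G, G !=set0, G `<=` U & f @` G `<=` V].

Definition quasi_continuous {X Y : topologicalType} (f : X -> Y) :=
  forall x, quasi_continuous_at f x.

Definition QP (R : realType) (X : topologicalType) : set {ptws X -> R} :=
  [set f | @quasi_continuous X R f].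

Definition lindelof_degree_le (X : topologicalType) (K : Type) :=
  forall C : set (set X), (forall U, C U -> open U) ->
    \bigcup_(U in C) U = [set: X] ->
    exists D : set (set X),
      [/\ D `<=` C, D #<= [set: K] & \bigcup_(U in D) U = [set: X]].

(* t(S) <= |K| where S carries the subspace topology of Z; the closure of
   A `<=` S in the subspace S is (closure A) `&` S. *)
Definition tightness_le (Z : topologicalType) (S : set Z) (K : Type) :=
  forall (z : Z) (A : set Z), S z -> A `<=` S -> closure A z ->
    exists B : set Z, [/\ B `<=` A, B #<= [set: K] & closure B z].

(* Main.v *)
Require Import Defs.
From HB Require Import structures.
From mathcomp Require Import all_boot all_order all_algebra.
From mathcomp Require Import all_classical all_reals all_analysis.
Import numFieldTopology.Exports numFieldNormedType.Exports.
Local Open Scope classical_set_scope.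
Local Open Scope card_scope.

Set Implicit Arguments. Unset Strict Implicit. Unset Printing Implicit Defensive.
Import Order.TTheory GRing.Theory Num.Theory.
Definition goodp {K : Type} (p : set K) :=
  (exists e : nat -> K, injective e /\ range e `<=` p) /\
  (exists i : K -> nat, forall y y', p y -> p y' -> i y = i y' -> y = y').

Lemma countable_inj {K : Type} (p : set K) : countable p ->
  exists i : K -> nat, forall y y', p y -> p y' -> i y = i y' -> y = y'.
Proof.
move=> /pcard_injP[i hi]; exists i => y y' py py' e.
by apply: hi => //; rewrite inE.
Qed.

Lemma nat_inj {K : Type} (p : set K) : [set: nat] #<= p ->
  exists e : nat -> K, injective e /\ range e `<=` p.
Proof.
elim/Ppointed: K p => K p.
  rewrite emptyE => /eqP /(congr1 (@^~ 0%N)) /=; rewrite propeqE => -[+ _].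
  by move=> /(_ I).
move=> /pcard_leP[f]; have [e he ie] : exists2 e : nat -> K, set_fun setT p e & set_inj setT e.
  by apply/injfunPex; squash f.
exists e; split; last by move=> _ [n _ <-]; exact: he.
by move=> a b; apply: ie; rewrite inE.
Qed.

Lemma partitionK (K : pointedType) : [set: nat] #<= [set: K] ->
  exists Pc : K -> set K, [/\ (forall y, Pc y y),
    (forall y y' w, Pc y w -> Pc y' w -> Pc y = Pc y') & (forall y, goodp (Pc y))].
Proof.
move=> hK.
pose P := [set F : set (set K) | (forall p, F p -> goodp p) /\
  (forall p q w, F p -> F q -> p w -> q w -> p = q)].
have [M [[Mg Md] Mmax]] : exists M, P M /\ forall B, M `<` B -> ~ P B.
  apply: Zorn_bigcup => G GP Gtot; split.
    by move=> p [F GF Fp]; exact: (GP F GF).1 p Fp.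
  move=> p q w [F1 G1 Fp] [F2 G2 Fq] pw qw.
  have [h|h] := Gtot F1 F2 G1 G2.
    exact: (GP F2 G2).2 p q w (h _ Fp) Fq pw qw.
  exact: (GP F1 G1).2 p q w Fp (h _ Fq) pw qw.
pose UM := \bigcup_(p in M) p.
pose R := ~` UM.
have Rfin : ~ ([set: nat] #<= R).
  move=> /nat_inj[e [ie eR]].
  pose p0 := range e.
  have Mp0 : ~ M p0.
    by move=> Mp; apply: (eR (e 0%N)); [exists 0%N | exists p0 => //; exists 0%N].
  apply: (Mmax (M `|` [set p0])).
    split; first exact: subsetUl.
    by move=> h; apply: Mp0; apply: h; right.
  split.
    move=> p [Mp|->]; first exact: Mg.
    split; first by exists e; split.
    apply: countable_inj; exact: card_image_le.
  move=> p q w [Mp|->] [Mq|->] pw qw //.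
  - exact: Md pw qw.
  - by exfalso; apply: (eR w qw); exists p.
  - by exfalso; apply: (eR w pw); exists q.
have [p1 Mp1] : exists p1, M p1.
  apply: contrapT => nM; apply: Rfin; apply: card_le_trans hK _.
  apply: subset_card_le => y _ [p Mp _]; apply: nM; by exists p.
have Rc : countable R.
  apply: finite_set_countable; apply: contrapT => /infiniteP; exact: Rfin.
pose q := p1 `|` R.
have gq : goodp q.
  have [[e [ie ep1]] [i1 hi1]] := Mg _ Mp1.
  split; first by exists e; split => // y /ep1 ?; left.
  have [iR hiR] := countable_inj Rc.
  exists (fun y => if `[< p1 y >] then (i1 y).*2 else (iR y).*2.+1)%N.
  move=> y y' qy qy'; case: (asboolP (p1 y)) => py; case: (asboolP (p1 y')) => py'.
  - by move/(congr1 half); rewrite !doubleK; exact: hi1.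
  - by move/(congr1 odd); rewrite /= !odd_double.
  - by move/(congr1 odd); rewrite /= !odd_double.
  - move=> /(congr1 half) /=; rewrite !uphalf_double; apply: hiR.
    + by case: qy.
    + by case: qy'.
pose Fam := [set p | p = q \/ (M p /\ p <> p1)].
have Famd : forall p p' w, Fam p -> Fam p' -> p w -> p' w -> p = p'.
  have aux : forall p w, M p -> p <> p1 -> q w -> p w -> False.
    move=> p w Mp np1 [p1w|Rw] pw.
      by apply: np1; exact: Md pw p1w.
    by apply: Rw; exists p.
  move=> p p' w [->|[Mp np]] [->|[Mp' np']] pw p'w //.
  - by exfalso; exact: aux Mp' np' pw p'w.
  - by exfalso; exact: aux Mp np p'w pw.
  - exact: Md pw p'w.
have Famc : forall y, exists p, Fam p /\ p y.
  move=> y; case: (pselect (q y)) => qy; first by exists q; split => //; left.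
  have : UM y by apply: contrapT => nUM; apply: qy; right.
  move=> [p Mp py]; exists p; split => //; right; split => // ep.
  by apply: qy; left; rewrite -ep.
have [Pc hPc] := choice Famc.
exists Pc; split.
- by move=> y; case: (hPc y).
- move=> y y' w h1 h2; exact: Famd (hPc y).1 (hPc y').1 h1 h2.
- move=> y; case: (hPc y) => -[->|[Mp _]] _ //; exact: Mg.
Qed.

Lemma cardXnat (K : pointedType) : [set: nat] #<= [set: K] ->
  exists f : K * nat -> K, injective f.
Proof.
move=> /partitionK [Pc [Pcy Pcd Pcg]].
have : forall p : set K, exists ei : (nat -> K) * (K -> nat), goodp p ->
    [/\ injective ei.1, range ei.1 `<=` p &
       forall y y', p y -> p y' -> ei.2 y = ei.2 y' -> y = y'].
  move=> p; case: (pselect (goodp p)) => gp; last first.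
    by exists ((fun=> point), (fun=> 0%N)).
  have [[e [ie ep]] [i hi]] := gp.
  by exists (e, i).
move=> /choice [EI hEI].
exists (fun ym => (EI (Pc ym.1)).1 (pickle ((EI (Pc ym.1)).2 ym.1, ym.2))).
move=> [y m] [y' m'] /= eq.
have [ie1 r1 i1] := hEI _ (Pcg y).
have [ie2 r2 i2] := hEI _ (Pcg y').
have epc : Pc y = Pc y'.
  apply: (Pcd y y' ((EI (Pc y)).1 (pickle ((EI (Pc y)).2 y, m)))).
    by apply: r1; eexists.
  by rewrite eq; apply: r2; eexists.
move: eq; rewrite -epc => /ie1 /(pcan_inj pickleK_inv) [/i1 h ->].
by rewrite (h (Pcy y)) // epc.
Qed.
Section S.
Variables (R : realType) (X : topologicalType).

Lemma qc_cst (c : R) : @quasi_continuous X R (fun _ => c).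
Proof.
move=> x U V oU Ux oV Vc; exists U; split => //; first by exists x.
by move=> _ [y _ <-].
Qed.

Lemma qc_ind (W : set X) : open W ->
  @quasi_continuous X R (fun y => if `[< closure W y >] then 0%R else 1%R).
Proof.
move=> oW x U V oU Ux oV.
case: (asboolP (closure W x)) => cx Vx.
- exists (U `&` W); split.
  + exact: openI.
  + have [y [Wy Uy]] := cx U (open_nbhs_nbhs (conj oU Ux)).
    by exists y; split.
  + by move=> y [].
  + move=> _ [y [_ Wy] <-]; case: asboolP => // ncy.
    by exfalso; apply: ncy; exact: subset_closure.
- exists (U `&` ~` closure W); split.
  + apply: openI => //; rewrite openC; exact: closed_closure.
  + by exists x.
  + by move=> y [].
  + by move=> _ [y [_ ncy] <-]; case: asboolP.
Qed.


Lemma W_open (V : X -> set X) (s : seq X) : (forall x, open (V x)) ->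
  open (foldr (fun x acc => V x `|` acc) set0 s).
Proof. by move=> oV; elim: s => [|x s IH] /=; [exact: open0 | exact: openU]. Qed.

Lemma W_sub (V : X -> set X) (s : seq X) x : x \in s ->
  V x `<=` foldr (fun x acc => V x `|` acc) set0 s.
Proof.
elim: s => [//|y s IH]; rewrite in_cons => /orP[/eqP ->|xs] /= w Vw; first by left.
by right; exact: IH.
Qed.

Lemma W_cl (U V : X -> set X) (s : seq X) t : (forall x, closure (V x) `<=` U x) ->
  closure (foldr (fun x acc => V x `|` acc) set0 s) t -> exists2 x, x \in s & U x t.
Proof.
move=> hVU; elim: s => [|y s IH] /=; first by rewrite closure0.
rewrite closureU => -[/hVU Uy|/IH [x xs Ux]].
  by exists y => //; rewrite mem_head.
by exists x => //; rewrite in_cons xs orbT.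
Qed.

End S.

Theorem mainTheorem2 (R : realType) (X : topologicalType) :
  regular_space X ->
  forall K : Type, [set: nat] #<= [set: K] ->
    tightness_le (@QP R X) K -> lindelof_degree_le X K.
Proof.
move=> reg K.
elim/Ppointed: K => K hK.
  by move: hK; rewrite emptyE => /eqP /(congr1 (@^~ 0%N)) /=; rewrite propeqE => -[/(_ I)].
move=> tight C Copen Ccov.
have hUV : forall x : X, exists UV : set X * set X,
    [/\ C UV.1, UV.1 x, open UV.2, UV.2 x & closure UV.2 `<=` UV.1].
  move=> x; have Tx : [set: X] x := I.
  move: Tx; rewrite -Ccov => -[U CU Ux].
  have [N Nx clN] := reg x U (open_nbhs_nbhs (conj (Copen U CU) Ux)).
  move: Nx; rewrite nbhsE; case=> O [oO Ox] ON.
  exists (U, O); split => //=.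
  exact: subset_trans (closureS ON) clN.
have [UV hUVx] := choice hUV.
pose Ux x := (UV x).1; pose Vx x := (UV x).2.
pose W (s : seq X) := foldr (fun x acc => Vx x `|` acc) set0 s.
have oV : forall x, open (Vx x) by move=> x; have [] := hUVx x.
have clVU : forall x, closure (Vx x) `<=` Ux x by move=> x; have [] := hUVx x.
pose gs (s : seq X) : {ptws X -> R} :=
  fun y => if `[< closure (W s) y >] then 0%R else 1%R.
pose z : {ptws X -> R} := fun _ => 0%R.
pose A := range gs.
have AQ : A `<=` @QP R X.
  move=> _ [s _ <-]; apply: qc_ind; exact: W_open.
have Qz : @QP R X z by exact: qc_cst.
pose Fseq := filter_from [set: seq X] (fun s0 => [set s : seq X | {subset s0 <= s}]).
have FF : Filter Fseq.
  apply: filter_from_filter; first by exists [::].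
  move=> i j _ _; exists (i ++ j) => // s /= h; split => y yin; apply: h;
    by rewrite mem_cat yin ?orbT.
have clA : closure A z.
  have cvgF : {ptws, gs @ Fseq --> z}.
    apply/pointwise_cvgP => t N Nz.
    exists [:: t] => // s /= hs.
    have ts : t \in s by apply: hs; rewrite mem_head.
    rewrite /gs; case: asboolP => [_|nc]; first exact: nbhs_singleton.
    exfalso; apply: nc; apply: subset_closure; apply: (W_sub (V:=Vx) ts); by have [] := hUVx t.
  move=> N Nz; have [s0 _ hs0] := cvgF N Nz.
  exists (gs s0); split; first by exists s0.
  by apply: hs0 => y.
have [B [BA BK clB]] := tight z A Qz AQ clA.
have hex : forall g : {ptws X -> R}, exists s, A g -> g = gs s.
  move=> g.
  case: (pselect (A g)) => [[s _ <-]|nA]; first by exists s.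
  by exists [::].
have [sB hsB] := choice hex.
have cov : forall t, exists g, B g /\ exists2 x, x \in sB g & Ux x t.
  move=> t.
  pose Nt := [set h : {ptws X -> R} | (h t < 2^-1)%R].
  have nN : nbhs z Nt.
    have := @proj_continuous X (fun _ => R) t z.
    move=> h; suff : (proj t @ nbhs z) [set r : R | (r < 2^-1)%R] by [].
    apply: h.
    apply: open_nbhs_nbhs; split; first exact: open_lt.
    by rewrite /proj /z /= invr_gt0 ltr0n.
  have [g [Bg Ng]] := clB Nt nN.
  exists g; split => //.
  have eg := hsB g (BA g Bg).
  have Ng' : (gs (sB g) t < 2^-1)%R by rewrite -eg.
  move: Ng'; rewrite /gs; case: asboolP => [c _|_].
    exact: (W_cl (U:=Ux) (V:=Vx) clVU c).
  move=> h; have : (1 < 2 :> R)%R by rewrite ltr1n.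
  by rewrite -invf_lt1 ?ltr0n // => /lt_trans /(_ h); rewrite ltxx.
pose E' := [set gi : {ptws X -> R} * nat | B gi.1 /\ (gi.2 < size (sB gi.1))%N].
pose Dm := fun gi : {ptws X -> R} * nat => nth set0 (map Ux (sB gi.1)) gi.2.
exists (Dm @` E'); split.
- move=> _ [[g i] [/= Bg ilt] <-]; rewrite /Dm /=.
  case Es: (sB g) ilt => [//|x0 s'] ilt.
  rewrite (nth_map x0) //.
  by have [] := hUVx (nth x0 (x0 :: s') i).
- apply: card_le_trans (card_image_le _ _) _.
  have [f finj] := cardXnat hK.
  move/pcard_injP: BK => [jB hjB].
  apply/pcard_injP; exists (fun gi => f (jB gi.1, gi.2)).
  move=> [g i] [g' i']; rewrite !inE => -[/= Bg _] [/= Bg' _] /finj [] eg ->.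
  by rewrite (hjB g g') // inE.
- apply/seteqP; split => // t _.
  have [g [Bg [x xs Uxt]]] := cov t.
  exists (Ux x) => //; exists (g, index x (sB g)).
    by split => //=; rewrite index_mem.
  by rewrite /Dm /= (nth_map x) ?index_mem // nth_index.
Qed.
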